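(* Let $f_j$, $j\in J=\{1,\dots,m\}$, be convex functions on $\mathbb{R}^n$, let $D=\{x\in\mathbb{R}^n: f_j(x)\le 0,\ j\in J\}$, and let $f$ be a continuous function on $\mathbb{R}^n$ attaining its minimum on $D$. Assume that $f$ is convex, that each $f_j$ is strongly convex with constant $\mu_j>0$, that $D$ satisfies the Slater condition, and that no point of absolute (unconstrained) minimum of $f$ on $\mathbb{R}^n$ (if such a point exists) belongs to $\operatorname{int} D$. Then the problem $\min\{f(x): x\in D\}$ has a unique solution.
   Context: For each $j\in J$ the set $D_j=\{x: f_j(x)\le 0\}$ is assumed to have nonempty interior. *)

(* Defs.v *)
From HB Require Import structures.
From mathcomp Require Import all_boot all_order all_algebra.
From mathcomp Require Import all_classical all_reals all_analysis.
Set Implicit Arguments. Unset Strict Implicit. Unset Printing Implicit Defensive.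
Import Order.TTheory GRing.Theory Num.Theory.
Import numFieldNormedType.Exports.
Local Open Scope ring_scope.
Local Open Scope classical_set_scope.

Definition sqnorm (R : realType) (n : nat) (x : 'rV[R]_n) : R :=
  \sum_(i < n) (x ord0 i) ^+ 2.

Definition convex_fun (R : realType) (n : nat) (g : 'rV[R]_n -> R) : Prop :=
  forall (x y : 'rV[R]_n) (t : R), 0 <= t -> t <= 1 ->
    g (t *: x + (1 - t) *: y) <= t * g x + (1 - t) * g y.

Definition strongly_convex (R : realType) (n : nat) (mu : R)
    (g : 'rV[R]_n -> R) : Prop :=
  forall (x y : 'rV[R]_n) (t : R), 0 <= t -> t <= 1 ->
    g (t *: x + (1 - t) *: y)
      <= t * g x + (1 - t) * g y - mu / 2 * t * (1 - t) * sqnorm (x - y).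

Definition feasible (R : realType) (n m : nat) (fs : 'I_m -> 'rV[R]_n -> R)
  : set 'rV[R]_n := [set x | forall j, fs j x <= 0].

Definition slater (R : realType) (n m : nat) (fs : 'I_m -> 'rV[R]_n -> R)
  : Prop := exists x : 'rV[R]_n, forall j, fs j x < 0.

Definition is_min_on (R : realType) (n : nat) (g : 'rV[R]_n -> R)
  (A : set 'rV[R]_n) (x : 'rV[R]_n) : Prop :=
  A x /\ forall y, A y -> g x <= g y.

(* Main.v *)
Require Import Defs.
From HB Require Import structures.
From mathcomp Require Import all_boot all_order all_algebra.
From mathcomp Require Import all_classical all_reals all_analysis.
From mathcomp Require Import ring lra.
Import Order.TTheory GRing.Theory Num.Theory.
Import numFieldNormedType.Exports.
Local Open Scope ring_scope.
Local Open Scope classical_set_scope.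

Lemma avg_bound (R : realType) (n : nat) (g : 'rV[R]_n -> R) :
  convex_fun g -> forall (M : R) (a : nat -> 'rV[R]_n) (k : nat),
  (forall i, (i <= k)%N -> g (a i) <= M) ->
  g ((k.+1%:R)^-1 *: \sum_(i < k.+1) a i) <= M.
Proof.
move=> hg M a; elim=> [|k IH] h.
  by rewrite big_ord1 invr1 scale1r; apply: h.
rewrite big_ord_recr /=.
have h1 := IH (fun i hi => h i (leqW hi)).
have h2 := h k.+1 (leqnn _).
set N1 : R := k.+1%:R in h1 *.
have N1p : 0 < N1 by rewrite /N1 ltr0n.
have N2E : k.+2%:R = N1 + 1 :> R by rewrite /N1 natr1.
clearbody N1.
have hN1 : N1 != 0 by rewrite gt_eqF.
have hN2 : N1 + 1 != 0 by rewrite gt_eqF // ltr_wpDr.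
set t := N1 / (N1 + 1).
have t0 : 0 <= t by apply: divr_ge0; lra.
have t1 : t <= 1 by rewrite /t ler_pdivrMr; lra.
have -> : (k.+2%:R)^-1 *: (\sum_(i < k.+1) a i + a k.+1)
   = t *: ((N1^-1) *: \sum_(i < k.+1) a i) + (1 - t) *: a k.+1.
  by rewrite N2E scalerDr scalerA; congr (_ *: _ + _ *: _); rewrite /t; field;
   rewrite ?hN1 ?hN2.
apply: le_trans (hg _ _ _ t0 t1) _.
nra.
Qed.

Arguments avg_bound {R n g}.

Lemma seg_bound (R : realType) (n : nat) (g : 'rV[R]_n -> R) :
  convex_fun g -> forall (z v : 'rV[R]_n) (N c : R), 0 < N -> `|c| <= N ->
  g (z + c *: v) <= `|g (z + N *: v)| + `|g (z - N *: v)|.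
Proof.
move=> hg z v N c N0 hc.
move: hc; rewrite ler_norml => /andP[hc1 hc2].
set t := (N + c) / (2 * N).
have t0 : 0 <= t by apply: divr_ge0; lra.
have t1 : t <= 1 by rewrite /t ler_pdivrMr; lra.
have -> : z + c *: v = t *: (z + N *: v) + (1 - t) *: (z - N *: v).
  apply/rowP => i; rewrite !mxE /t; field; rewrite gt_eqF //; lra.
apply: le_trans (hg _ _ _ t0 t1) _.
set a := g _; set b := g _.
have ha := ler_norm a; have hb := ler_norm b.
have ha0 := normr_ge0 a; have hb0 := normr_ge0 b.
nra.
Qed.

Arguments seg_bound {R n g}.

Lemma conv_ub (R : realType) (n : nat) (g : 'rV[R]_n -> R) :
  convex_fun g -> forall z : 'rV[R]_n, exists M, forall y, ball z 1 y -> g y <= M.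
Proof.
case: n g => [|n'] g hg z.
  exists (g z) => y _.
  have -> : y = z by apply/rowP => -[].
  by [].
set N : R := n'.+1%:R.
have Np : 0 < N by rewrite /N ltr0n.
exists (\sum_(i < n'.+1) (`|g (z + N *: 'e_i)| + `|g (z - N *: 'e_i)|)).
move=> y [_ hy].
set d := y - z.
pose a := fun k : nat => z + (N * d 0 (inord k)) *: ('e_(inord k) : 'rV[R]_n'.+1).
have -> : y = N^-1 *: \sum_(i < n'.+1) a i.
  rewrite /a.
  under eq_bigr => i _ do rewrite inord_val.
  rewrite big_split /= sumr_const card_ord -scaler_nat.
  under eq_bigr => i _ do rewrite -scalerA.
  rewrite -scaler_sumr -row_sum_delta scalerDr !scalerA mulVf ?gt_eqF // !scale1r.
  by rewrite /d addrC subrK.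
apply: avg_bound => // i hi.
rewrite /a /=.
have hb : `|N * d 0 (inord i)| <= N.
  rewrite normrM gtr0_norm // ler_piMr // ?ltW //.
  have := hy 0 (inord i); rewrite -ball_normE /ball_ /= => hij.
  by rewrite /d !mxE distrC.
have := seg_bound hg z ('e_(inord i)) N _ Np hb.
move/le_trans; apply.
rewrite (bigD1 (inord i)) //= lerDl.
by apply: sumr_ge0 => j _; rewrite addr_ge0.
Qed.

Arguments conv_ub {R n g}.

Lemma conv_nbhs (R : realType) (n : nat) (g : 'rV[R]_n -> R) :
  convex_fun g -> forall z : 'rV[R]_n, g z < 0 -> nbhs z [set y | g y <= 0].
Proof.
move=> hg z hz.
have [M hM] := conv_ub hg z.
set c := g z in hz *.
have hM0 := normr_ge0 M; have hMM := ler_norm M.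
set s := - c / (`|M| - c).
have hsp : 0 < s by apply: divr_gt0; lra.
have hs1 : s <= 1 by rewrite /s ler_pdivrMr; lra.
have hsE : s * (`|M| - c) = - c.
  rewrite /s; field; rewrite gt_eqF //; lra.
apply/nbhs_ballP; exists s => // y [_ hy].
pose w := z + s^-1 *: (y - z).
have hw : g w <= M.
  apply: hM; split => // i j.
  have := hy i j; rewrite -ball_normE /ball_ /= => hij.
  rewrite /ball /= /w !mxE.
  have -> : z i j - (z i j + s^-1 * (y i j - z i j)) = s^-1 * (z i j - y i j) by ring.
  by rewrite normrM gtr0_norm ?invr_gt0 // ltr_pdivrMl // mulr1.
have -> : y = s *: w + (1 - s) *: z.
  by apply/rowP => i; rewrite /w !mxE; field; rewrite gt_eqF.
apply: le_trans (hg _ _ _ (ltW hsp) hs1) _.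
rewrite -/c.
nra.
Qed.
Arguments conv_nbhs {R n g}.

Lemma sqnorm_gt0 (R : realType) (n : nat) (v : 'rV[R]_n) : v != 0 -> 0 < sqnorm v.
Proof.
move=> hv; rewrite lt_neqAle sumr_ge0 ?andbT; last by move=> i _; rewrite sqr_ge0.
apply: contra hv => /eqP/esym/psumr_eq0P h.
apply/eqP/rowP => i; rewrite mxE.
have := h (fun k _ => sqr_ge0 _) i isT => /eqP.
by rewrite sqrf_eq0 => /eqP; rewrite [ord0](_ : _ = 0) // => ->.
Qed.

Theorem theorem1p1p3 (R : realType) (n m : nat)
  (fs : 'I_m -> 'rV[R]_n -> R) (f : 'rV[R]_n -> R) (mu : 'I_m -> R) :
  (forall j, convex_fun (fs j)) ->
  (forall j, (interior [set x | fs j x <= 0]) !=set0) ->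
  continuous f ->
  (exists x, is_min_on f (feasible fs) x) ->
  convex_fun f ->
  (forall j, 0 < mu j) ->
  (forall j, strongly_convex (mu j) (fs j)) ->
  slater fs ->
  (forall x, is_min_on f setT x -> ~ (interior (feasible fs)) x) ->
  exists x, is_min_on f (feasible fs) x /\
    forall y, is_min_on f (feasible fs) y -> y = x.
Proof.
move=> hcv _ _ [x0 [Dx0 minx0]] hf hmu hsc _ hint.
exists x0; split => // y [Dy miny].
case: (eqVneq y x0) => // neq; exfalso.
have hq : 0 < sqnorm (x0 - y) by apply: sqnorm_gt0; rewrite subr_eq0 eq_sym.
have h20 : (0 : R) <= 2^-1 by rewrite invr_ge0.
have h21 : (2^-1 : R) <= 1 by rewrite invf_le1 // ler1n.
pose z := 2^-1 *: x0 + (1 - 2^-1) *: y.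
have hz : forall j, fs j z < 0.
  move=> j; have := hsc j x0 y _ h20 h21.
  have := Dx0 j; have := Dy j; have := hmu j.
  set a := fs j x0; set b := fs j y; set q := sqnorm _ in hq *; set u := mu j.
  move=> hu hb ha h.
  apply: (le_lt_trans h).
  have : 0 < u / 2 * 2^-1 * (1 - 2^-1) * q.
    by rewrite !mulr_gt0 // ?invr_gt0 ?divr_gt0 // subr_gt0 invf_lt1 // ltr1n.
  lra.
have fz : f z <= f x0.
  apply: le_trans (hf _ _ _ h20 h21) _.
  have := miny x0 Dx0; lra.
have iz : interior (feasible fs) z.
  rewrite /interior /feasible.
  exact: (@filter_forall _ _ (fun j y => fs j y <= 0) (nbhs z) _
            (fun j => conv_nbhs (hcv j) z (hz j))).
apply: (hint z _ iz); split => // w _.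
have := iz; move/nbhs_ballP => [e /= e0 he].
set t : R := e / (2 * (`|w - z| + e)).
have hwz := normr_ge0 (w - z).
have tp : 0 < t by apply: divr_gt0; lra.
have tE : t * (2 * (`|w - z| + e)) = e by rewrite /t; field; rewrite gt_eqF //; lra.
have t1 : t <= 1 by rewrite /t ler_pdivrMr; lra.
pose p := t *: w + (1 - t) *: z.
have Dp : feasible fs p.
  apply: he; rewrite -ball_normE /ball_ /=.
  have -> : z - p = t *: (z - w).
    by apply/rowP => i; rewrite /p !mxE; ring.
  rewrite normrZ gtr0_norm // distrC; nra.
have := minx0 p Dp; have := hf w z t (ltW tp) t1.
rewrite -/p => h1 h2.
nra.
Qed.
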